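(* Let $A, B, C, X$ be spaces and let $f \colon A \times B \times C \to X$ be a map. Suppose that $f$ factors, up to homotopy, through each of the two projections $A\times B\times C \to A \times C$ and $A \times B \times C \to B \times C$. Then $f$ factors, up to homotopy, through the projection $A \times B \times C \to C$. *)

(* Defs.v *)
From HB Require Import structures.
From mathcomp Require Import all_boot all_algebra.
From mathcomp Require Import all_classical all_reals topology.
From mathcomp Require Import Rstruct Rstruct_topology.
From Stdlib Require Import Reals.

Set Implicit Arguments.
Unset Strict Implicit.
Unset Printing Implicit Defensive.

Local Open Scope classical_set_scope.

Definition unit_interval : topologicalType :=
  subspace (`[0%R, 1%R]%classic : set Rdefinitions.R).

Definition homotopic (T X : topologicalType) (f g : T -> X) : Prop :=
  exists H : unit_interval * T -> X,
    continuous H /\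
    (forall t, H ((0%R : Rdefinitions.R) : unit_interval, t) = f t) /\
    (forall t, H ((1%R : Rdefinitions.R) : unit_interval, t) = g t).

Definition factors_up_to_homotopy (Y Z X : topologicalType)
    (f : Y -> X) (p : Y -> Z) : Prop :=
  exists g : Z -> X, continuous g /\ homotopic f (g \o p).

Definition proj_AC (A B C : topologicalType) (x : A * B * C) : A * C :=
  (x.1.1, x.2).
Definition proj_BC (A B C : topologicalType) (x : A * B * C) : B * C :=
  (x.1.2, x.2).
Definition proj_C (A B C : topologicalType) (x : A * B * C) : C := x.2.

(* Main.v *)
Require Import Defs.
From HB Require Import structures.
From mathcomp Require Import all_boot all_order all_algebra.
From mathcomp Require Import all_classical all_reals topology normedtype.
From mathcomp Require Import Rstruct Rstruct_topology.
From mathcomp Require Import lra.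
Import Order.TTheory GRing.Theory Num.Theory.
Import numFieldNormedType.Exports.
Local Open Scope classical_set_scope.
Local Open Scope ring_scope.
Notation RR := Rdefinitions.R.

Lemma c1 (R : realType) : continuous (fun x : R => 1 - x).
Proof. move=> x; exact: (cvgB (f:=cst (1:R)) (g:=id) (cvg_cst _) cvg_id). Qed.

Lemma c2 (R : realType) : continuous (fun x : R => Num.min (2 * x) 1).
Proof.
apply: (@min_fun_continuous _ _ _ (fun x : R => 2 * x) (fun=> 1)).
  move=> x; exact: (cvgM (f:=cst (2:R)) (g:=id) (cvg_cst _) cvg_id).
exact: cst_continuous.
Qed.

Lemma c3 (R : realType) : continuous (fun x : R => Num.max (2 * x - 1) 0).
Proof.
apply: (@max_fun_continuous _ _ _ (fun x : R => 2 * x - 1) (fun=> 0)).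
  move=> x; apply: (cvgB (f:=fun x : R => 2 * x) (g:=cst 1) _ (cvg_cst _)).
  exact: (cvgM (f:=cst (2:R)) (g:=id) (cvg_cst _) cvg_id).
exact: cst_continuous.
Qed.

Lemma pair_cont {S T U V : topologicalType} (f : S -> U) (g : T -> V) :
  continuous f -> continuous g -> continuous (fun p : S * T => (f p.1, g p.2)).
Proof.
move=> fc gc [s t]; apply: cvg_pair.
- apply: (cvg_comp fst f _ (fc s)); exact: cvg_fst.
- apply: (cvg_comp snd g _ (gc t)); exact: cvg_snd.
Qed.

Lemma ui_cont (g : RR -> RR) : continuous g ->
  (forall x : RR, 0 <= x <= 1 -> 0 <= g x <= 1) ->
  continuous (g : unit_interval -> unit_interval).
Proof.
move=> gc gI; apply/subspace_continuousP => x Ax.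
have Agx : (`[0%R, 1%R]%classic : set RR) (g x).
  by move: Ax; rewrite /= !in_itv /= => /gI.
apply/(subspace_cvgP _ (x:=g x)) => //.
move=> P /=; rewrite /within /= => HP.
have := gc x _ HP; rewrite /= nbhs_simpl /=.
apply: filterS => y Py Ay; apply: Py.
by move: Ay; rewrite /= !in_itv /= => /gI.
Qed.

Lemma homotopic_ext (T X : topologicalType) (f g g' : T -> X) :
  homotopic f g -> g =1 g' -> homotopic f g'.
Proof.
by move=> [H [Hc [H0 H1]]] e; exists H; split=> //; split=> // t; rewrite H1 e.
Qed.

Lemma homotopic_comp (S T X : topologicalType) (p : S -> T) (f g : T -> X) :
  continuous p -> homotopic f g -> homotopic (f \o p) (g \o p).
Proof.
move=> pc [H [Hc [H0 H1]]].
exists (fun q : unit_interval * S => H (q.1, p q.2)); split; last first.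
  by split=> t /=; rewrite ?H0 ?H1.
move=> q; apply: (continuous_comp (f := fun q : unit_interval * S => (q.1, p q.2))).
  exact: (pair_cont (fun x => x) p (fun _ => cvg_id) pc).
exact: Hc.
Qed.

Lemma homotopic_sym (T X : topologicalType) (f g : T -> X) :
  homotopic f g -> homotopic g f.
Proof.
move=> [H [Hc [H0 H1]]].
exists (fun q : unit_interval * T => H ((1 - (q.1 : RR) : RR) : unit_interval, q.2)).
split; last first.
  split=> t /=.
    by rewrite subr0 H1.
  by rewrite subrr H0.
move=> q; apply: (continuous_comp (f := fun q : unit_interval * T => ((1 - (q.1 : RR) : RR) : unit_interval, q.2))).
  apply: (pair_cont (fun x : unit_interval => (1 - (x : RR) : RR) : unit_interval) id _ (fun _ => cvg_id)).
  apply: ui_cont; first exact: c1.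
  move=> x /andP[? ?]; apply/andP; split; lra.
exact: Hc.
Qed.

Lemma cont_setT (T X : topologicalType) (f : T -> X) :
  {within setT, continuous f} -> continuous f.
Proof. by move=> h x; have := h x; rewrite /continuous_at /= nbhs_subspaceT. Qed.

Lemma homotopic_trans (T X : topologicalType) (f g h : T -> X) :
  homotopic f g -> homotopic g h -> homotopic f h.
Proof.
move=> [H [Hc [H0 H1]]] [K [Kc [K0 K1]]].
pose L1 := fun q : unit_interval * T => H ((Num.min (2 * (q.1 : RR)) 1 : RR) : unit_interval, q.2).
pose L2 := fun q : unit_interval * T => K ((Num.max (2 * (q.1 : RR) - 1) 0 : RR) : unit_interval, q.2).
have L1c : continuous L1.
  move=> q; apply: (continuous_comp (f := fun q : unit_interval * T => ((Num.min (2 * (q.1 : RR)) 1 : RR) : unit_interval, q.2))); last exact: Hc.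
  apply: (pair_cont (fun x : unit_interval => (Num.min (2 * (x : RR)) 1 : RR) : unit_interval) id _ (fun _ => cvg_id)).
  apply: ui_cont; first exact: c2.
  move=> x /andP[? ?]; apply/andP; split.
    by rewrite le_min; apply/andP; split; lra.
  by rewrite ge_min lexx orbT.
have L2c : continuous L2.
  move=> q; apply: (continuous_comp (f := fun q : unit_interval * T => ((Num.max (2 * (q.1 : RR) - 1) 0 : RR) : unit_interval, q.2))); last exact: Kc.
  apply: (pair_cont (fun x : unit_interval => (Num.max (2 * (x : RR) - 1) 0 : RR) : unit_interval) id _ (fun _ => cvg_id)).
  apply: ui_cont; first exact: c3.
  move=> x /andP[? ?]; apply/andP; split.
    by rewrite le_max lexx orbT.
  by rewrite ge_max; apply/andP; split; lra.
pose L := fun q : unit_interval * T => if (q.1 : RR) <= 2^-1 then L1 q else L2 q.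
exists L; split; last first.
  have e0 : Num.min (2 * (0:RR)) 1 = 0 by rewrite mulr0 /Num.min ltr01.
  have e1 : Num.max (2 * (1:RR) - 1) 0 = 1.
    by rewrite mulr1 (_ : (2:RR) - 1 = 1) /Num.max ?ltr10 //; lra.
  split=> t; rewrite /L /L1 /L2 /=.
    rewrite (_ : ((0:RR) <= 2^-1) = true); last by rewrite invr_ge0 ler0n.
    by rewrite e0 H0.
  rewrite (_ : ((1:RR) <= 2^-1) = false); last by apply/negbTE; rewrite -ltNge invf_lt1 ?ltr1n.
  by rewrite e1 K1.
apply: cont_setT.
have -> : [set: unit_interval * T] = [set q | (q.1 : RR) <= 2^-1] `|` [set q | 2^-1 <= (q.1 : RR)].
  apply/seteqP; split=> q _ //=.
  by case: (lerP (q.1 : RR) 2^-1) => hq; [left|right; apply: ltW].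
apply: withinU_continuous.
- apply: (@preimage_closed _ _ fst [set x : unit_interval | (x:RR) <= 2^-1]).
    by move=> q _; exact: cvg_fst.
  apply: closed_subspaceW; exact: closed_le.
- apply: (@preimage_closed _ _ fst [set x : unit_interval | 2^-1 <= (x:RR)]).
    by move=> q _; exact: cvg_fst.
  apply: closed_subspaceW; exact: closed_ge.
- apply: (subspace_eq_continuous (f := L1)); last exact: continuous_subspaceT.
  by move=> q; rewrite inE /= /from_subspace /L => hq; case: ifP => // /negbT /negP hn; exfalso; exact: (hn hq).
- apply: (subspace_eq_continuous (f := L2)); last exact: continuous_subspaceT.
  move=> q; rewrite inE /= /from_subspace /L => hq.
  case: ifP => // hq2.
  have e : (q.1 : RR) = 2^-1 by apply/eqP; rewrite eq_le hq hq2.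
  rewrite /L1 /L2 e.
  have h2 : (2:RR) * 2^-1 = 1 by apply: mulfV; lra.
  rewrite h2 subrr minxx maxxx.
  by rewrite K0 H1.
Qed.

Arguments homotopic_comp {S T X p f g}.
Arguments homotopic_trans {T X f g h}.
Arguments homotopic_sym {T X f g}.

Lemma slice_cont (Y Z X : topologicalType) (y0 : Y) (g : Y * Z -> X) :
  continuous g -> continuous (fun z : Z => g (y0, z)).
Proof.
move=> gc z; apply: (continuous_comp (f := fun z : Z => (y0, z))); last exact: gc.
by apply: cvg_pair; [exact: cvg_cst | exact: cvg_id].
Qed.

Theorem lemma2p4 (A B C X : topologicalType) (f : A * B * C -> X) :
  continuous f ->
  (inhabited A \/ inhabited B) ->
  factors_up_to_homotopy f (@proj_AC A B C) ->
  factors_up_to_homotopy f (@proj_BC A B C) ->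
  factors_up_to_homotopy f (@proj_C A B C).
Proof.
move=> fc [[a0]|[b0]] [g1 [g1c hf1]] [g2 [g2c hf2]].
- pose i := fun x : A * B * C => (a0, x.1.2, x.2).
  have ic : continuous i.
    apply: (pair_cont (fun ab : A * B => (a0, ab.2)) id _ (fun _ => cvg_id)).
    exact: (pair_cont (fun _ : A => a0) id (fun _ => cvg_cst _) (fun _ => cvg_id)).
  exists (fun c => g1 (a0, c)); split; first exact: slice_cont.
  have s1 := homotopic_comp ic hf1.
  have s2 := homotopic_comp ic hf2.
  apply: (homotopic_trans hf2).
  apply: (homotopic_trans (homotopic_sym s2)).
  exact: s1.
- pose i := fun x : A * B * C => (x.1.1, b0, x.2).
  have ic : continuous i.
    apply: (pair_cont (fun ab : A * B => (ab.1, b0)) id _ (fun _ => cvg_id)).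
    exact: (pair_cont id (fun _ : B => b0) (fun _ => cvg_id) (fun _ => cvg_cst _)).
  exists (fun c => g2 (b0, c)); split; first exact: slice_cont.
  have s1 := homotopic_comp ic hf1.
  have s2 := homotopic_comp ic hf2.
  apply: (homotopic_trans hf1).
  apply: (homotopic_trans (homotopic_sym s1)).
  exact: s2.
Qed.
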